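(* Let $B>1$ and $k\ge1$ be constants, and let $(\theta_L,\theta_R)$ with $\theta_L,\theta_R\in(0,1)$ be the positive solution of $\exp(-B\sqrt k\,\theta_R)=1-\theta_L$ and $\exp(-\frac{B}{\sqrt k}\theta_L)=1-\theta_R$. Then $(1-\theta_L)(1-\theta_R)B^2<1$.
   Context: $\log$ and $\exp$ are natural. The pair $(\theta_L,\theta_R)$ describes the asymptotic fractions of $V_L$ and $V_R$ lying in the giant component of the bipartite random graph $G(n,kn,\frac{B}{n\sqrt k})$. *)

(* Defs.v *)
From Stdlib Require Import Reals.
Open Scope R_scope.

(* (thL, thR) is a positive solution in (0,1)^2 of the giant-component
   fixed-point system for G(n, kn, B/(n sqrt k)). *)
Definition giant_fixed_point (B k thL thR : R) : Prop :=
  0 < thL < 1 /\ 0 < thR < 1 /\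
  exp (- (B * sqrt k * thR)) = 1 - thL /\
  exp (- ((B / sqrt k) * thL)) = 1 - thR.

(* Main.v *)
Require Import Defs.
From Stdlib Require Import Reals Lra Psatz.
Open Scope R_scope.

Lemma key_ineq (v x : R) : 0 < v -> exp (- v) = x -> x * (1 + v) < 1.
Proof.
  intros Hv Hx.
  pose proof (exp_ineq1 v ltac:(lra)) as H1.
  assert (Hp : x * exp v = 1).
  { rewrite <- Hx, <- exp_plus. replace (-v+v) with 0 by ring. apply exp_0. }
  assert (0 < x) by (rewrite <- Hx; apply exp_pos).
  nra.
Qed.

Theorem mainTheorem16 (B k thL thR : R) :
  1 < B -> 1 <= k -> giant_fixed_point B k thL thR ->
  (1 - thL) * (1 - thR) * B ^ 2 < 1.
Proof.
  intros HB Hk [[HL1 HL2] [[HR1 HR2] [E1 E2]]].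
  assert (Hs : 0 < sqrt k) by (apply sqrt_lt_R0; lra).
  assert (Hss : sqrt k * sqrt k = k) by (apply sqrt_sqrt; lra).
  set (s := sqrt k) in *.
  assert (Ha : 0 < B * s) by nra.
  assert (Hb : 0 < B / s) by (apply Rdiv_lt_0_compat; lra).
  assert (Hab : (B * s) * (B / s) = B ^ 2) by (field; lra).
  pose proof (key_ineq (B * s * thR) (1 - thL) ltac:(nra) E1) as K1.
  pose proof (key_ineq (B / s * thL) (1 - thR) ltac:(nra) E2) as K2.
  set (a := B * s) in *. set (b := B / s) in *.
  rewrite <- Hab.
  assert (P1 : (1 - thL) * a * thR < thL) by nra.
  assert (P2 : (1 - thR) * b * thL < thR) by nra.
  assert (P3 : ((1 - thL) * a * thR) * ((1 - thR) * b * thL) < thL * thR).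
  { assert (0 <= (1 - thL) * a * thR).
    { apply Rmult_le_pos; [apply Rmult_le_pos|]; lra. }
    assert (0 <= (1 - thR) * b * thL).
    { apply Rmult_le_pos; [apply Rmult_le_pos|]; lra. }
    apply Rmult_le_0_lt_compat; lra. }
  assert (Hp : 0 < thL * thR) by (apply Rmult_lt_0_compat; lra).
  apply (Rmult_lt_reg_r (thL * thR)); [exact Hp|].
  replace ((1 - thL) * (1 - thR) * (a * b) * (thL * thR)) with
    (((1 - thL) * a * thR) * ((1 - thR) * b * thL)) by ring.
  lra.
Qed.
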